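(* Let $V$ be the set of the $v=280$ partitions of $\{1,\ldots,9\}$ into three cells each of size three. For partitions $\pi,\sigma\in V$ let $\pi\wedge\sigma$ denote their meet (the partition whose cells are the nonempty intersections of a cell of $\pi$ with a cell of $\sigma$). Define $280\times280$ $0/1$-matrices $A_0=I$ and $A_1,A_2,A_3,A_4$ by: $(A_1)_{\pi\sigma}=1$ iff $\pi\wedge\sigma$ has $9$ cells, $(A_2)_{\pi\sigma}=1$ iff it has $7$ cells, $(A_3)_{\pi\sigma}=1$ iff it has $6$ cells, $(A_4)_{\pi\sigma}=1$ iff it has $5$ cells. Let $v_0=1,v_1=36,v_2=162,v_3=54,v_4=27$ be the respective row sums. Let $\mathcal{P}(3^3)$ be the graph with adjacency matrix $A_1$. Let $E_0=\frac1{280}J$ (with $J$ the all-ones matrix) and let $E_1$ be the orthogonal projection onto the eigenspace of $A_1$ for the eigenvalue $-12$. Suppose $x$ is the characteristic vector of an independent set of $\mathcal{P}(3^3)$ of size $70$. Then \[ \sum_{i=0}^4\frac{x^TA_ix}{v\,v_i}A_i=\frac14I+\frac1{18}A_2+\frac1{12}A_3+\frac5{36}A_4=\frac{70}{4}E_0+\frac{70}{36}E_1 . \]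
   Context: The matrices $A_0,\ldots,A_4$ form a symmetric association scheme; two partitions are adjacent in $\mathcal{P}(3^3)$ precisely when each cell of one contains exactly one point from each cell of the other, i.e. when their meet has 9 cells. The eigenspace of $A_1$ for $-12$ has dimension 27. *)

(* Defs.v *)
From HB Require Import structures.
From mathcomp Require Import all_boot all_order all_algebra.
Set Implicit Arguments. Unset Strict Implicit. Unset Printing Implicit Defensive.
Import Order.TTheory GRing.Theory Num.Theory.

Definition is_part33 (P : {set {set 'I_9}}) : bool :=
  [&& partition P [set: 'I_9], #|P| == 3 & [forall B in P, #|B| == 3]].

Definition part33 := {P : {set {set 'I_9}} | is_part33 P}.

Definition meet_ncells (p q : part33) : nat :=
  #|[set A :&: B | A in val p, B in val q] :\ set0|.

Definition adj33 (p q : part33) : bool := meet_ncells p q == 9.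

Definition independent33 (S : {set part33}) : bool :=
  [forall p in S, forall q in S, ~~ adj33 p q].

Local Open Scope ring_scope.

Notation nV := #|{: part33}|.
Definition vtx (i : 'I_nV) : part33 := enum_val i.

Definition meetmx (R : nzRingType) (c : nat) : 'M[R]_nV :=
  \matrix_(i, j) (meet_ncells (vtx i) (vtx j) == c)%:R.

Definition Amx (R : nzRingType) (k : nat) : 'M[R]_nV :=
  match k with
  | 0 => 1%:M
  | 1 => meetmx R 9
  | 2 => meetmx R 7
  | 3 => meetmx R 6
  | _ => meetmx R 5
  end.

Definition vval (k : nat) : nat :=
  match k with 0 => 1 | 1 => 36 | 2 => 162 | 3 => 54 | _ => 27 end%N.

Definition orthoproj (R : realFieldType) (n : nat) (U : 'M[R]_n) : 'M[R]_n :=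
  let B := row_base U in B^T *m invmx (B *m B^T) *m B.

Definition E0 (R : realFieldType) : 'M[R]_nV := (280%:R)^-1 *: const_mx 1.
Definition E1 (R : realFieldType) : 'M[R]_nV :=
  orthoproj (eigenspace (Amx R 1) (-12)).

Definition charvec (R : nzRingType) (S : {set part33}) : 'cV[R]_nV :=
  \col_i (vtx i \in S)%:R.

(* Main.v *)
Require Import Defs.
From HB Require Import structures.
From mathcomp Require Import all_boot all_order all_algebra.
From mathcomp Require Import ring lra.
Import Order.TTheory GRing.Theory Num.Theory.
Set Implicit Arguments. Unset Strict Implicit. Unset Printing Implicit Defensive.

Definition codes : seq (seq nat) := [::
[::0;0;0;1;1;1;2;2;2];
[::0;0;0;1;1;2;1;2;2];
[::0;0;0;1;1;2;2;1;2];
[::0;0;0;1;1;2;2;2;1];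
[::0;0;0;1;2;1;1;2;2];
[::0;0;0;1;2;1;2;1;2];
[::0;0;0;1;2;1;2;2;1];
[::0;0;0;1;2;2;1;1;2];
[::0;0;0;1;2;2;1;2;1];
[::0;0;0;1;2;2;2;1;1];
[::0;0;1;0;1;1;2;2;2];
[::0;0;1;0;1;2;1;2;2];
[::0;0;1;0;1;2;2;1;2];
[::0;0;1;0;1;2;2;2;1];
[::0;0;1;0;2;1;1;2;2];
[::0;0;1;0;2;1;2;1;2];
[::0;0;1;0;2;1;2;2;1];
[::0;0;1;0;2;2;1;1;2];
[::0;0;1;0;2;2;1;2;1];
[::0;0;1;0;2;2;2;1;1];
[::0;0;1;1;0;1;2;2;2];
[::0;0;1;1;0;2;1;2;2];
[::0;0;1;1;0;2;2;1;2];
[::0;0;1;1;0;2;2;2;1];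
[::0;0;1;1;1;0;2;2;2];
[::0;0;1;1;1;2;0;2;2];
[::0;0;1;1;1;2;2;0;2];
[::0;0;1;1;1;2;2;2;0];
[::0;0;1;1;2;0;1;2;2];
[::0;0;1;1;2;0;2;1;2];
[::0;0;1;1;2;0;2;2;1];
[::0;0;1;1;2;1;0;2;2];
[::0;0;1;1;2;1;2;0;2];
[::0;0;1;1;2;1;2;2;0];
[::0;0;1;1;2;2;0;1;2];
[::0;0;1;1;2;2;0;2;1];
[::0;0;1;1;2;2;1;0;2];
[::0;0;1;1;2;2;1;2;0];
[::0;0;1;1;2;2;2;0;1];
[::0;0;1;1;2;2;2;1;0];
[::0;0;1;2;0;1;1;2;2];
[::0;0;1;2;0;1;2;1;2];
[::0;0;1;2;0;1;2;2;1];
[::0;0;1;2;0;2;1;1;2];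
[::0;0;1;2;0;2;1;2;1];
[::0;0;1;2;0;2;2;1;1];
[::0;0;1;2;1;0;1;2;2];
[::0;0;1;2;1;0;2;1;2];
[::0;0;1;2;1;0;2;2;1];
[::0;0;1;2;1;1;0;2;2];
[::0;0;1;2;1;1;2;0;2];
[::0;0;1;2;1;1;2;2;0];
[::0;0;1;2;1;2;0;1;2];
[::0;0;1;2;1;2;0;2;1];
[::0;0;1;2;1;2;1;0;2];
[::0;0;1;2;1;2;1;2;0];
[::0;0;1;2;1;2;2;0;1];
[::0;0;1;2;1;2;2;1;0];
[::0;0;1;2;2;0;1;1;2];
[::0;0;1;2;2;0;1;2;1];
[::0;0;1;2;2;0;2;1;1];
[::0;0;1;2;2;1;0;1;2];
[::0;0;1;2;2;1;0;2;1];
[::0;0;1;2;2;1;1;0;2];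
[::0;0;1;2;2;1;1;2;0];
[::0;0;1;2;2;1;2;0;1];
[::0;0;1;2;2;1;2;1;0];
[::0;0;1;2;2;2;0;1;1];
[::0;0;1;2;2;2;1;0;1];
[::0;0;1;2;2;2;1;1;0];
[::0;1;0;0;1;1;2;2;2];
[::0;1;0;0;1;2;1;2;2];
[::0;1;0;0;1;2;2;1;2];
[::0;1;0;0;1;2;2;2;1];
[::0;1;0;0;2;1;1;2;2];
[::0;1;0;0;2;1;2;1;2];
[::0;1;0;0;2;1;2;2;1];
[::0;1;0;0;2;2;1;1;2];
[::0;1;0;0;2;2;1;2;1];
[::0;1;0;0;2;2;2;1;1];
[::0;1;0;1;0;1;2;2;2];
[::0;1;0;1;0;2;1;2;2];
[::0;1;0;1;0;2;2;1;2];
[::0;1;0;1;0;2;2;2;1];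
[::0;1;0;1;1;0;2;2;2];
[::0;1;0;1;1;2;0;2;2];
[::0;1;0;1;1;2;2;0;2];
[::0;1;0;1;1;2;2;2;0];
[::0;1;0;1;2;0;1;2;2];
[::0;1;0;1;2;0;2;1;2];
[::0;1;0;1;2;0;2;2;1];
[::0;1;0;1;2;1;0;2;2];
[::0;1;0;1;2;1;2;0;2];
[::0;1;0;1;2;1;2;2;0];
[::0;1;0;1;2;2;0;1;2];
[::0;1;0;1;2;2;0;2;1];
[::0;1;0;1;2;2;1;0;2];
[::0;1;0;1;2;2;1;2;0];
[::0;1;0;1;2;2;2;0;1];
[::0;1;0;1;2;2;2;1;0];
[::0;1;0;2;0;1;1;2;2];
[::0;1;0;2;0;1;2;1;2];
[::0;1;0;2;0;1;2;2;1];
[::0;1;0;2;0;2;1;1;2];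
[::0;1;0;2;0;2;1;2;1];
[::0;1;0;2;0;2;2;1;1];
[::0;1;0;2;1;0;1;2;2];
[::0;1;0;2;1;0;2;1;2];
[::0;1;0;2;1;0;2;2;1];
[::0;1;0;2;1;1;0;2;2];
[::0;1;0;2;1;1;2;0;2];
[::0;1;0;2;1;1;2;2;0];
[::0;1;0;2;1;2;0;1;2];
[::0;1;0;2;1;2;0;2;1];
[::0;1;0;2;1;2;1;0;2];
[::0;1;0;2;1;2;1;2;0];
[::0;1;0;2;1;2;2;0;1];
[::0;1;0;2;1;2;2;1;0];
[::0;1;0;2;2;0;1;1;2];
[::0;1;0;2;2;0;1;2;1];
[::0;1;0;2;2;0;2;1;1];
[::0;1;0;2;2;1;0;1;2];
[::0;1;0;2;2;1;0;2;1];
[::0;1;0;2;2;1;1;0;2];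
[::0;1;0;2;2;1;1;2;0];
[::0;1;0;2;2;1;2;0;1];
[::0;1;0;2;2;1;2;1;0];
[::0;1;0;2;2;2;0;1;1];
[::0;1;0;2;2;2;1;0;1];
[::0;1;0;2;2;2;1;1;0];
[::0;1;1;0;0;1;2;2;2];
[::0;1;1;0;0;2;1;2;2];
[::0;1;1;0;0;2;2;1;2];
[::0;1;1;0;0;2;2;2;1];
[::0;1;1;0;1;0;2;2;2];
[::0;1;1;0;1;2;0;2;2];
[::0;1;1;0;1;2;2;0;2];
[::0;1;1;0;1;2;2;2;0];
[::0;1;1;0;2;0;1;2;2];
[::0;1;1;0;2;0;2;1;2];
[::0;1;1;0;2;0;2;2;1];
[::0;1;1;0;2;1;0;2;2];
[::0;1;1;0;2;1;2;0;2];
[::0;1;1;0;2;1;2;2;0];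
[::0;1;1;0;2;2;0;1;2];
[::0;1;1;0;2;2;0;2;1];
[::0;1;1;0;2;2;1;0;2];
[::0;1;1;0;2;2;1;2;0];
[::0;1;1;0;2;2;2;0;1];
[::0;1;1;0;2;2;2;1;0];
[::0;1;1;1;0;0;2;2;2];
[::0;1;1;1;0;2;0;2;2];
[::0;1;1;1;0;2;2;0;2];
[::0;1;1;1;0;2;2;2;0];
[::0;1;1;1;2;0;0;2;2];
[::0;1;1;1;2;0;2;0;2];
[::0;1;1;1;2;0;2;2;0];
[::0;1;1;1;2;2;0;0;2];
[::0;1;1;1;2;2;0;2;0];
[::0;1;1;1;2;2;2;0;0];
[::0;1;1;2;0;0;1;2;2];
[::0;1;1;2;0;0;2;1;2];
[::0;1;1;2;0;0;2;2;1];
[::0;1;1;2;0;1;0;2;2];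
[::0;1;1;2;0;1;2;0;2];
[::0;1;1;2;0;1;2;2;0];
[::0;1;1;2;0;2;0;1;2];
[::0;1;1;2;0;2;0;2;1];
[::0;1;1;2;0;2;1;0;2];
[::0;1;1;2;0;2;1;2;0];
[::0;1;1;2;0;2;2;0;1];
[::0;1;1;2;0;2;2;1;0];
[::0;1;1;2;1;0;0;2;2];
[::0;1;1;2;1;0;2;0;2];
[::0;1;1;2;1;0;2;2;0];
[::0;1;1;2;1;2;0;0;2];
[::0;1;1;2;1;2;0;2;0];
[::0;1;1;2;1;2;2;0;0];
[::0;1;1;2;2;0;0;1;2];
[::0;1;1;2;2;0;0;2;1];
[::0;1;1;2;2;0;1;0;2];
[::0;1;1;2;2;0;1;2;0];
[::0;1;1;2;2;0;2;0;1];
[::0;1;1;2;2;0;2;1;0];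
[::0;1;1;2;2;1;0;0;2];
[::0;1;1;2;2;1;0;2;0];
[::0;1;1;2;2;1;2;0;0];
[::0;1;1;2;2;2;0;0;1];
[::0;1;1;2;2;2;0;1;0];
[::0;1;1;2;2;2;1;0;0];
[::0;1;2;0;0;1;1;2;2];
[::0;1;2;0;0;1;2;1;2];
[::0;1;2;0;0;1;2;2;1];
[::0;1;2;0;0;2;1;1;2];
[::0;1;2;0;0;2;1;2;1];
[::0;1;2;0;0;2;2;1;1];
[::0;1;2;0;1;0;1;2;2];
[::0;1;2;0;1;0;2;1;2];
[::0;1;2;0;1;0;2;2;1];
[::0;1;2;0;1;1;0;2;2];
[::0;1;2;0;1;1;2;0;2];
[::0;1;2;0;1;1;2;2;0];
[::0;1;2;0;1;2;0;1;2];
[::0;1;2;0;1;2;0;2;1];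
[::0;1;2;0;1;2;1;0;2];
[::0;1;2;0;1;2;1;2;0];
[::0;1;2;0;1;2;2;0;1];
[::0;1;2;0;1;2;2;1;0];
[::0;1;2;0;2;0;1;1;2];
[::0;1;2;0;2;0;1;2;1];
[::0;1;2;0;2;0;2;1;1];
[::0;1;2;0;2;1;0;1;2];
[::0;1;2;0;2;1;0;2;1];
[::0;1;2;0;2;1;1;0;2];
[::0;1;2;0;2;1;1;2;0];
[::0;1;2;0;2;1;2;0;1];
[::0;1;2;0;2;1;2;1;0];
[::0;1;2;0;2;2;0;1;1];
[::0;1;2;0;2;2;1;0;1];
[::0;1;2;0;2;2;1;1;0];
[::0;1;2;1;0;0;1;2;2];
[::0;1;2;1;0;0;2;1;2];
[::0;1;2;1;0;0;2;2;1];
[::0;1;2;1;0;1;0;2;2];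
[::0;1;2;1;0;1;2;0;2];
[::0;1;2;1;0;1;2;2;0];
[::0;1;2;1;0;2;0;1;2];
[::0;1;2;1;0;2;0;2;1];
[::0;1;2;1;0;2;1;0;2];
[::0;1;2;1;0;2;1;2;0];
[::0;1;2;1;0;2;2;0;1];
[::0;1;2;1;0;2;2;1;0];
[::0;1;2;1;1;0;0;2;2];
[::0;1;2;1;1;0;2;0;2];
[::0;1;2;1;1;0;2;2;0];
[::0;1;2;1;1;2;0;0;2];
[::0;1;2;1;1;2;0;2;0];
[::0;1;2;1;1;2;2;0;0];
[::0;1;2;1;2;0;0;1;2];
[::0;1;2;1;2;0;0;2;1];
[::0;1;2;1;2;0;1;0;2];
[::0;1;2;1;2;0;1;2;0];
[::0;1;2;1;2;0;2;0;1];
[::0;1;2;1;2;0;2;1;0];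
[::0;1;2;1;2;1;0;0;2];
[::0;1;2;1;2;1;0;2;0];
[::0;1;2;1;2;1;2;0;0];
[::0;1;2;1;2;2;0;0;1];
[::0;1;2;1;2;2;0;1;0];
[::0;1;2;1;2;2;1;0;0];
[::0;1;2;2;0;0;1;1;2];
[::0;1;2;2;0;0;1;2;1];
[::0;1;2;2;0;0;2;1;1];
[::0;1;2;2;0;1;0;1;2];
[::0;1;2;2;0;1;0;2;1];
[::0;1;2;2;0;1;1;0;2];
[::0;1;2;2;0;1;1;2;0];
[::0;1;2;2;0;1;2;0;1];
[::0;1;2;2;0;1;2;1;0];
[::0;1;2;2;0;2;0;1;1];
[::0;1;2;2;0;2;1;0;1];
[::0;1;2;2;0;2;1;1;0];
[::0;1;2;2;1;0;0;1;2];
[::0;1;2;2;1;0;0;2;1];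
[::0;1;2;2;1;0;1;0;2];
[::0;1;2;2;1;0;1;2;0];
[::0;1;2;2;1;0;2;0;1];
[::0;1;2;2;1;0;2;1;0];
[::0;1;2;2;1;1;0;0;2];
[::0;1;2;2;1;1;0;2;0];
[::0;1;2;2;1;1;2;0;0];
[::0;1;2;2;1;2;0;0;1];
[::0;1;2;2;1;2;0;1;0];
[::0;1;2;2;1;2;1;0;0];
[::0;1;2;2;2;0;0;1;1];
[::0;1;2;2;2;0;1;0;1];
[::0;1;2;2;2;0;1;1;0];
[::0;1;2;2;2;1;0;0;1];
[::0;1;2;2;2;1;0;1;0];
[::0;1;2;2;2;1;1;0;0]].
Definition my_meet (s t : seq nat) : nat :=
  size (undup [seq (nth 0 s i, nth 0 t i) | i <- iota 0 9]).
Definition valid (s : seq nat) : bool :=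
  [&& all (fun c => count (fun i => nth 0 s i == c) (iota 0 9) == 3) (iota 0 3),
      all (fun i => nth 0 s i < 3) (iota 0 9)
    & size (undup [seq nth 0 s i | i <- iota 0 9]) == 3].
Fixpoint allseqs (n : nat) : seq (seq nat) :=
  if n is n'.+1 then [seq c :: l | c <- iota 0 3, l <- allseqs n'] else [:: [::]].
Definition canon (s : seq nat) : seq nat := [seq index a (rev (undup (rev s))) | a <- s].
Definition samek (s h : seq nat) : bool :=
  all (fun i => all (fun j => (nth 0 s i == nth 0 s j) == (nth 0 h i == nth 0 h j)) (iota 0 9)) (iota 0 9).
Definition cover_check : bool :=
  all (fun s => valid s ==> ((canon s \in codes) && samek s (canon s))) (allseqs 9).
Definition clsl : seq nat := [:: 3; 9; 7; 6; 5].
Definition Ltab : seq (seq nat) :=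
  [:: [:: 0; 36; 0; 0; 0]; [:: 1; 2; 18; 6; 9]; [:: 0; 4; 20; 8; 4];
      [:: 0; 4; 24; 8; 0]; [:: 0; 12; 24; 0; 0]].
Definition Lnat (t k : nat) : nat := nth 0 (nth [::] Ltab t) k.
Definition kc1 : bool := all valid codes && uniq codes.
Definition kc2 : bool :=
  all (fun a => all (fun b => [&& my_meet a b \in clsl, (my_meet a b == 3) == (a == b)
        & my_meet a b == my_meet b a]) codes) codes.
Definition tbl : seq (seq nat) := [seq [seq my_meet a b | b <- codes] | a <- codes].
Definition kc3 : bool :=
  all (fun ap => all (fun bq =>
     let t := index (my_meet ap.1 bq.1) clsl in
     let z := [seq ab.2 | ab <- zip ap.2 bq.2 & ab.1 == 9] in
     all (fun k => count_mem (nth 0 clsl k) z == Lnat t k) (iota 0 5))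
   (zip codes tbl)) (zip codes tbl).

Lemma kc1_ok : kc1. Proof. vm_compute. reflexivity. Qed.

Lemma kc3_ok : kc3. Proof. vm_compute. reflexivity. Qed.
Lemma cover_ok : cover_check. Proof. vm_compute. reflexivity. Qed.
Lemma kc2_ok : kc2. Proof. vm_compute. reflexivity. Qed.

Lemma undup_transfer (I T U : eqType) (h : I -> T) (k : I -> U) (l : seq I) :
  (forall x y, (h x == h y) = (k x == k y)) ->
  size (undup (map h l)) = size (undup (map k l)).
Proof.
move=> hk; elim: l => [|a l IH] //=.
have -> : (h a \in map h l) = (k a \in map k l).
  apply/mapP/mapP => [[y Hy E]|[y Hy E]]; exists y => //; apply/eqP.
    by rewrite -hk E.
  by rewrite hk E.
by case: ifP => _ //=; rewrite IH.
Qed.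

Lemma card_imset_seq (T : finType) (U : eqType) (h : 'I_9 -> T) (F : nat -> U) :
  (forall x y : 'I_9, (h x == h y) = (F x == F y)) ->
  #|[set h x | x : 'I_9]| = size (undup [seq F i | i <- iota 0 9]).
Proof.
move=> hk; rewrite imset_card.
have -> : #|image h 'I_9| = #|undup (image h 'I_9)| by apply: eq_card => z; rewrite mem_undup.
rewrite (card_uniqP _) ?undup_uniq //.
rewrite -val_enum_ord -map_comp /image_mem.
by apply: undup_transfer.
Qed.

Lemma card_imset_seqT (T : finType) (U : eqType) (h : 'I_9 -> T) (F : nat -> U) :
  (forall x y : 'I_9, (h x == h y) = (F x == F y)) ->
  #|[set h x | x in [set: 'I_9]]| = size (undup [seq F i | i <- iota 0 9]).
Proof.
move=> hk; rewrite -(card_imset_seq hk); apply: eq_card => z.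
by apply/imsetP/imsetP => [[x _ ->]|[x _ ->]]; exists x.
Qed.

Lemma card_set_count (P : nat -> bool) :
  #|[set x : 'I_9 | P x]| = count P (iota 0 9).
Proof.
by rewrite cardsE cardE -val_enum_ord count_map enumT /enum_mem size_filter.
Qed.

Definition lab (s : seq nat) (x : 'I_9) : nat := nth 0 s x.
Definition cls (s : seq nat) (x : 'I_9) : {set 'I_9} := [set y in [set: 'I_9] | lab s x == lab s y].
Definition decode (s : seq nat) : {set {set 'I_9}} := preim_partition (lab s) [set: 'I_9].

Lemma decodeE s : decode s = [set cls s x | x in [set: 'I_9]].
Proof. by []. Qed.

Lemma mem_cls s x y : (y \in cls s x) = (lab s x == lab s y).
Proof. by rewrite inE in_setT. Qed.

Lemma cls_eq s x y : (cls s x == cls s y) = (lab s x == lab s y).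
Proof.
apply/eqP/eqP => [E|E].
  by have := mem_cls s y y; rewrite -E mem_cls eqxx => /eqP.
by apply/setP => z; rewrite !mem_cls E.
Qed.

Lemma card_decode s : #|decode s| = size (undup [seq nth 0 s i | i <- iota 0 9]).
Proof. by rewrite decodeE; apply: card_imset_seqT => x y; rewrite cls_eq. Qed.

Lemma valid_lab_lt s x : valid s -> lab s x < 3.
Proof.
case/and3P => _ /allP H _; apply: H; rewrite mem_iota /=; exact: ltn_ord.
Qed.

Lemma card_cls s x : valid s -> #|cls s x| = 3.
Proof.
move=> V; have lt := valid_lab_lt x V.
case/and3P: V => /allP H _ _.
have Hm : lab s x \in iota 0 3 by rewrite mem_iota.
move/eqP: (H _ Hm) => E.
rewrite -{}[RHS]E; rewrite -card_set_count; apply: eq_card => y; rewrite mem_cls inE eq_sym.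
by [].
Qed.

Lemma decode_part s : valid s -> is_part33 (decode s).
Proof.
move=> V; apply/and3P; split.
- exact: preim_partitionP.
- by rewrite card_decode; case/and3P: V.
- apply/forall_inP => B; rewrite decodeE => /imsetP [x _ ->].
  by rewrite card_cls.
Qed.

Definition cell (s t : seq nat) (x : 'I_9) := cls s x :&: cls t x.

Lemma cls_same s x z : z \in cls s x -> cls s x = cls s z.
Proof. by rewrite mem_cls => /eqP E; apply/setP => y; rewrite !mem_cls E. Qed.

Lemma meet_set s t :
  [set A :&: B | A in decode s, B in decode t] :\ set0 = [set cell s t x | x in [set: 'I_9]].
Proof.
apply/setP => C; rewrite !inE; apply/andP/imsetP.
- case=> CnZ /imset2P [A B]; rewrite !decodeE => /imsetP [a _ ->] /imsetP [b _ ->] EC.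
  subst C; case/set0Pn: CnZ => z; rewrite inE => /andP [za zb].
  by exists z => //; rewrite /cell -(cls_same za) -(cls_same zb).
- case=> z _ ->; split.
    by apply/set0Pn; exists z; rewrite /cell inE !mem_cls !eqxx.
  by apply/imset2P; exists (cls s z) (cls t z); rewrite ?decodeE ?imset_f ?in_setT.
Qed.

Lemma meet_decode s t :
  #|[set A :&: B | A in decode s, B in decode t] :\ set0| = my_meet s t.
Proof.
rewrite meet_set /my_meet; apply: card_imset_seqT => x y.
apply/eqP/eqP => [E|[E1 E2]].
  have : y \in cell s t x by rewrite E /cell inE !mem_cls !eqxx.
  by rewrite /cell inE !mem_cls /lab => /andP [/eqP -> /eqP ->].
by apply/setP => z; rewrite /cell !inE /lab E1 E2.
Qed.

Section Cover.
Variable P : part33.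
Let Pv := val P.
Let e := enum Pv.
Let f (x : 'I_9) : nat := index (pblock Pv x) e.
Definition code_of : seq nat := [seq index (pblock Pv x) e | x <- enum 'I_9].

Let Ppart : partition Pv [set: 'I_9].
Proof. by case/and3P: (valP P). Qed.
Let Pcard : #|Pv| = 3.
Proof. by case/and3P: (valP P) => _ /eqP. Qed.
Let Pblk B : B \in Pv -> #|B| = 3.
Proof. by case/and3P: (valP P) => _ _ /forall_inP H /H /eqP. Qed.
Let Ptriv : trivIset Pv.
Proof. by case/and3P: Ppart. Qed.
Let Pcov x : x \in cover Pv.
Proof. by case/and3P: Ppart => /eqP -> _ _; rewrite in_setT. Qed.
Let Pnz : set0 \notin Pv.
Proof. by case/and3P: Ppart. Qed.

Let lab_code x : lab code_of x = f x.
Proof.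
by rewrite /lab /code_of (nth_map x) ?size_enum_ord ?ltn_ord // nth_ord_enum.
Qed.

Let pb_in x : pblock Pv x \in e.
Proof. by rewrite mem_enum pblock_mem. Qed.

Let cls_code x : cls code_of x = pblock Pv x.
Proof.
apply/setP => y; rewrite mem_cls !lab_code /f.
rewrite -(eq_pblock _ Ptriv (Pcov x)).
apply/eqP/eqP => [E|->] //.
by rewrite -(nth_index set0 (pb_in x)) E nth_index.
Qed.

Lemma decode_code : decode code_of = Pv.
Proof.
rewrite decodeE; apply/setP => B; apply/imsetP/idP => [[x _ ->]|BP].
  by rewrite cls_code pblock_mem.
have : B != set0 by apply: contraNneq Pnz => <-.
case/set0Pn => x xB; exists x; rewrite ?in_setT // cls_code.
by rewrite (def_pblock Ptriv BP xB).
Qed.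

Lemma valid_code : valid code_of.
Proof.
apply/and3P; split.
- apply/allP => c; rewrite mem_iota add0n => /andP [_ clt].
  have ce : c < size e by rewrite -cardE Pcard.
  have BP : nth set0 e c \in Pv by rewrite -mem_enum mem_nth.
  have : nth set0 e c != set0 by apply: contraNneq Pnz => <-.
  case/set0Pn => x xB.
  have fx : f x = c.
    by rewrite /f (def_pblock Ptriv BP xB) index_uniq ?enum_uniq.
  rewrite -card_set_count.
  have -> : [set x0 : 'I_9 | nth 0 code_of x0 == c] = cls code_of x.
    by apply/setP => y; rewrite mem_cls inE lab_code fx eq_sym.
  by rewrite cls_code Pblk ?pblock_mem.
- apply/allP => i; rewrite mem_iota add0n => /andP [_ ilt].
  have := lab_code (Ordinal ilt); rewrite /lab /= => ->.
  have : index (pblock Pv (Ordinal ilt)) e < size e by rewrite index_mem.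
  by rewrite -cardE Pcard.
- by rewrite -card_decode decode_code Pcard.
Qed.
End Cover.

Lemma codes_valid : all valid codes.
Proof. by case/andP: kc1_ok. Qed.
Lemma codes_uniq : uniq codes.
Proof. by case/andP: kc1_ok. Qed.

Lemma valid_of_code s : s \in codes -> valid s.
Proof. by move=> H; apply: (allP codes_valid). Qed.

Definition p0 : part33 :=
  Sub (decode [:: 0; 0; 0; 1; 1; 1; 2; 2; 2]) (decode_part (valid_of_code (mem_head _ _))).

Definition dec (s : seq nat) : part33 := insubd p0 (decode s).

Lemma dec_val s : s \in codes -> val (dec s) = decode s.
Proof. by move=> H; rewrite /dec insubdK //; apply: decode_part; apply: valid_of_code. Qed.

Lemma samek_decode s h : samek s h -> decode s = decode h.
Proof.
move=> H; rewrite !decodeE; apply: eq_imset => x; apply/setP => y; rewrite !mem_cls /lab.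
have Hx : val x \in iota 0 9 by rewrite mem_iota /=; exact: ltn_ord.
have Hy : val y \in iota 0 9 by rewrite mem_iota /=; exact: ltn_ord.
by move/allP: H => /(_ _ Hx) /allP /(_ _ Hy) /eqP.
Qed.

Lemma allseqs_in s : all (fun x => x < 3) s -> s \in allseqs (size s).
Proof.
elim: s => [|a s IH] //= /andP [a3 H].
have Hs := IH H.
by case: a a3 => [|[|[|a]]] // _; rewrite !mem_cat (map_f _ Hs) ?orbT.
Qed.

Lemma size_code_of p : size (code_of p) = 9.
Proof. by rewrite size_map size_enum_ord. Qed.

Definition cd (p : part33) : seq nat := canon (code_of p).

Lemma cd_spec p : (cd p \in codes) && samek (code_of p) (cd p).
Proof.
have V := valid_code p.
have H : code_of p \in allseqs 9.
  rewrite -(size_code_of p); apply: allseqs_in; apply/(all_nthP 0) => i.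
  rewrite size_code_of => ilt.
  case/and3P: V => _ /allP H _; apply: H; rewrite mem_iota; exact: ilt.
by have := allP cover_ok _ H; rewrite V.
Qed.

Lemma cd_in p : cd p \in codes.
Proof. by case/andP: (cd_spec p). Qed.

Lemma dec_cd p : dec (cd p) = p.
Proof.
apply: val_inj; rewrite dec_val ?cd_in //.
case/andP: (cd_spec p) => _ /samek_decode <-.
exact: decode_code.
Qed.

Lemma meet_cd p q : meet_ncells p q = my_meet (cd p) (cd q).
Proof.
by rewrite /meet_ncells -{1}(dec_cd p) -{1}(dec_cd q) !dec_val ?cd_in // meet_decode.
Qed.

Lemma kc2P a b : a \in codes -> b \in codes ->
  [/\ my_meet a b \in clsl, (my_meet a b == 3) = (a == b) & my_meet a b = my_meet b a].
Proof.
move=> Ha Hb; have := allP kc2_ok _ Ha => /allP /(_ _ Hb) /and3P [H1 /eqP H2 /eqP H3].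
by split.
Qed.

Lemma dec_inj : {in codes &, injective dec}.
Proof.
move=> a b Ha Hb E.
have E2 : decode a = decode b by rewrite -!dec_val // E.
have : my_meet a b = my_meet a a by rewrite -!meet_decode E2.
case: (kc2P Ha Hb) => _ H _; case: (kc2P Ha Ha) => _ H' _.
by move: H'; rewrite eqxx => /eqP -> /eqP; rewrite H => /eqP.
Qed.

Lemma sum_part33 (F : part33 -> nat) :
  \sum_(r : part33) F r = \sum_(h <- codes) F (dec h).
Proof.
rewrite -(big_map dec xpredT F).
have P : perm_eq [seq dec h | h <- codes] (enum {: part33}).
  apply: uniq_perm; rewrite ?enum_uniq ?map_inj_in_uniq ?codes_uniq //; first exact: dec_inj.
  move=> r; rewrite mem_enum; apply/mapP; exists (cd r); rewrite ?cd_in ?dec_cd //.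
rewrite (perm_big _ P) big_enum /=. by apply: eq_bigl => r.
Qed.

Lemma cd_dec h : h \in codes -> cd (dec h) = h.
Proof. by move=> H; apply: dec_inj; rewrite ?cd_in ?dec_cd. Qed.

Lemma sum_count (T : Type) (b : pred T) (l : seq T) : \sum_(h <- l) (b h : nat) = count b l.
Proof. by elim: l => [|a l IH]; rewrite ?big_nil ?big_cons ?IH. Qed.

Lemma zip_self (A B : Type) (g : A -> B) (l : seq A) : zip l (map g l) = map (fun a => (a, g a)) l.
Proof. by elim: l => [|a l IH] //=; rewrite IH. Qed.

Lemma kc3P a b k : a \in codes -> b \in codes -> k < 5 ->
  count (fun h => (my_meet a h == 9) && (my_meet h b == nth 0 clsl k)) codes
  = Lnat (index (my_meet a b) clsl) k.
Proof.
move=> Ha Hb Hk.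
have memz x : x \in codes -> (x, [seq my_meet x c | c <- codes]) \in zip codes tbl.
  by move=> Hx; rewrite /tbl zip_self; apply: (map_f (fun a => (a, _))).
have := allP kc3_ok _ (memz _ Ha) => /allP /(_ _ (memz _ Hb)) H.
cbv beta iota zeta delta [fst snd] in H.
have Hk' : k \in iota 0 5 by rewrite mem_iota.
move/allP: H => /(_ _ Hk') /eqP <-.
rewrite count_map count_filter zip_map count_map.
apply: eq_in_count => h Hh /=.
by case: (kc2P Hb Hh) => _ _ ->; rewrite andbC.
Qed.

Lemma K1 p q : meet_ncells p q \in clsl.
Proof. by rewrite meet_cd; case: (kc2P (cd_in p) (cd_in q)). Qed.

Lemma K1b p q : (meet_ncells p q == 3) = (p == q).
Proof.
rewrite meet_cd; case: (kc2P (cd_in p) (cd_in q)) => _ -> _.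
apply/eqP/eqP => [E|->] //; by rewrite -(dec_cd p) E dec_cd.
Qed.

Lemma K2 p q : meet_ncells p q = meet_ncells q p.
Proof. by rewrite !meet_cd; case: (kc2P (cd_in p) (cd_in q)). Qed.

Lemma K3 p q k : k < 5 ->
  \sum_(r : part33) ((meet_ncells p r == 9) && (meet_ncells r q == nth 0 clsl k) : nat)
  = Lnat (index (meet_ncells p q) clsl) k.
Proof.
move=> Hk; rewrite sum_part33 big_seq_cond.
rewrite (eq_bigr (fun h => ((my_meet (cd p) h == 9) && (my_meet h (cd q) == nth 0 clsl k)) : nat)).
  by rewrite -big_seq_cond sum_count kc3P ?cd_in // meet_cd.
by move=> h /andP [Hh _]; rewrite !meet_cd cd_dec.
Qed.

Local Open Scope ring_scope.

Lemma gram0 (R : realFieldType) m n (X : 'M[R]_(m, n)) : X *m X^T = 0 -> X = 0.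
Proof.
move=> H; apply/matrixP => i j; rewrite mxE.
have : (X *m X^T) i i = 0 by rewrite H mxE.
rewrite mxE => /eqP; rewrite psumr_eq0; last by move=> k _; rewrite mxE -expr2 sqr_ge0.
move/allP => /(_ j (mem_index_enum _)) /implyP /(_ isT).
by rewrite mxE -expr2 sqrf_eq0 => /eqP.
Qed.

Lemma gram_unit (R : realFieldType) m n (B : 'M[R]_(m, n)) : row_free B -> B *m B^T \in unitmx.
Proof.
move=> fB; rewrite -row_free_unit /row_free.
set M := B *m B^T.
have K0 : kermx M = 0.
  have H : kermx M *m M = 0 by apply: mulmx_ker.
  have KB : kermx M *m B = 0.
    apply: gram0; rewrite trmx_mul mulmxA -(mulmxA _ B) -/M H mul0mx //.
  by apply/eqP; rewrite -(mulmx_free_eq0 _ fB) KB.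
have := mxrank_ker M; rewrite K0 mxrank0 => /esym /eqP.
rewrite subn_eq0 => H; apply/eqP/anti_leq; rewrite H rank_leq_col //.
Qed.

Lemma orthoproj_eq (R : realFieldType) n (U F : 'M[R]_n) :
  F^T = F -> F *m F = F -> (U <= F)%MS -> (F <= U)%MS -> orthoproj U = F.
Proof.
move=> FT FF UF FU; rewrite /orthoproj /=.
move: (row_base U) (eq_row_base U) (row_base_free U) => B eqB fB.
have BF : (B <= F)%MS by rewrite eqB.
have FB : (F <= B)%MS by rewrite eqB.
have uBB : B *m B^T \in unitmx by apply: gram_unit.
have WT0 : (invmx (B *m B^T))^T = invmx (B *m B^T) by rewrite trmx_inv trmx_mul trmxK.
move: (mulmxV uBB) WT0; move: (invmx (B *m B^T)) => W BW WT.
have BFe : B *m F = B.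
  by case/submxP: BF => D ->; rewrite -mulmxA FF.
case/submxP: FB => Y FY.
have PF : B^T *m W *m B *m F = B^T *m W *m B by rewrite -mulmxA BFe.
have FP : F *m (B^T *m W *m B) = F.
  rewrite {1}FY !mulmxA -[Y *m B *m B^T]mulmxA -[Y *m (B *m B^T) *m W]mulmxA BW mulmx1 -FY //.
have PT : (B^T *m W *m B)^T = B^T *m W *m B.
  by rewrite !trmx_mul trmxK WT mulmxA.
have E1 : B^T *m W *m B = (F *m (B^T *m W *m B))^T by rewrite trmx_mul PT FT PF.
by rewrite FP FT in E1.
Qed.

Section Mx.
Variable R : realFieldType.
Local Notation A := (Amx R).

Definition typ (i j : 'I_nV) : nat := index (meet_ncells (vtx i) (vtx j)) clsl.

Lemma typ_lt i j : (typ i j < 5)%N.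
Proof. by rewrite /typ index_mem K1. Qed.

Lemma typ_sym i j : typ i j = typ j i.
Proof. by rewrite /typ K2. Qed.

Lemma meet_cls i j k : (k < 5)%N ->
  (meet_ncells (vtx i) (vtx j) == nth 0%N clsl k) = (typ i j == k).
Proof.
move=> Hk; have Hm := K1 (vtx i) (vtx j).
rewrite /typ; apply/eqP/eqP => [->|<-]; first by rewrite index_uniq.
by rewrite nth_index.
Qed.

Lemma A_meet k : (k < 5)%N -> A k = meetmx R (nth 0%N clsl k).
Proof.
case: k => [|[|[|[|[|k]]]]] // _.
apply/matrixP => i j; rewrite !mxE.
have := K1b (vtx i) (vtx j); rewrite /= => ->.
by rewrite (inj_eq enum_val_inj).
Qed.

Lemma Aentry k i j : (k < 5)%N -> A k i j = (typ i j == k)%:R.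
Proof. by move=> Hk; rewrite A_meet // mxE meet_cls. Qed.

Lemma sum_vtx (G : part33 -> nat) : \sum_(r < nV) G (vtx r) = \sum_(p : part33) G p.
Proof.
by rewrite -(big_enum_val _ (A := {: part33})); apply: eq_bigl.
Qed.

Definition comb (c : nat -> R) : 'M[R]_nV := \sum_(k < 5) c k *: A k.

Lemma comb_entry c i j : comb c i j = c (typ i j).
Proof.
rewrite summxE (bigD1 (Ordinal (typ_lt i j))) //= big1.
  by rewrite !mxE Aentry ?typ_lt // eqxx mulr1 addr0.
move=> k /eqP Hk; rewrite !mxE Aentry ?ltn_ord //.
case: eqP => [E|]; last by rewrite mulr0.
by case: Hk; apply: val_inj; rewrite /= E.
Qed.

Lemma A1Ak k : (k < 5)%N -> A 1 *m A k = comb (fun t => (Lnat t k)%:R).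
Proof.
move=> Hk; apply/matrixP => i j; rewrite comb_entry !mxE.
rewrite (eq_bigr (fun r => ((meet_ncells (vtx i) (vtx r) == 9) &&
            (meet_ncells (vtx r) (vtx j) == nth 0%N clsl k) : nat)%:R)); last first.
  by move=> r _; rewrite (A_meet Hk) !mxE -natrM mulnb.
rewrite -natr_sum.
rewrite (sum_vtx (fun p => ((meet_ncells (vtx i) p == 9) &&
            (meet_ncells p (vtx j) == nth 0%N clsl k) : nat))).
by rewrite K3 // -/(typ i j).
Qed.

Lemma comb_sym c : (comb c)^T = comb c.
Proof. by apply/matrixP => i j; rewrite mxE !comb_entry typ_sym. Qed.

Lemma A_sym k : (k < 5)%N -> (A k)^T = A k.
Proof. by move=> Hk; apply/matrixP => i j; rewrite mxE !Aentry // typ_sym. Qed.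

Lemma mulcomb_r m (u : 'M[R]_(m, nV)) c : u *m comb c = \sum_(k < 5) c k *: (u *m A k).
Proof. by rewrite mulmx_sumr; apply: eq_bigr => k _; rewrite scalemxAr. Qed.

Lemma mulA1comb c : A 1 *m comb c = comb (fun t => \sum_(k < 5) (Lnat t k)%:R * c k).
Proof.
apply/matrixP => i j; rewrite mulcomb_r comb_entry summxE.
by apply: eq_bigr => k _; rewrite mxE A1Ak ?ltn_ord // comb_entry mulrC.
Qed.

Lemma combZ a c : comb (fun t => a * c t) = a *: comb c.
Proof. by apply/matrixP => i j; rewrite mxE !comb_entry. Qed.

Lemma eigen_eqs (u : 'rV[R]_nV) th : u *m A 1 = th *: u -> forall k, (k < 5)%N -> forall j,
  th * (u *m A k) 0 j = \sum_(t < 5) (Lnat t k)%:R * (u *m A t) 0 j.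
Proof.
move=> H k Hk j.
have E : u *m (A 1 *m A k) = th *: (u *m A k) by rewrite mulmxA H -scalemxAl.
rewrite A1Ak // mulcomb_r in E.
have := congr1 (fun M : 'rV[R]_nV => M 0 j) E; rewrite mxE summxE => <-.
by apply: eq_bigr => t _; rewrite mxE.
Qed.

Section Proj.
Variables (th : R) (c lam : nat -> R).
Hypothesis HLc : forall t, (t < 5)%N -> \sum_(k < 5) (Lnat t k)%:R * c k = th * c t.
Hypothesis Hlam : forall u : 'rV[R]_nV, u *m A 1 = th *: u -> forall k, (k < 5)%N -> u *m A k = lam k *: u.
Hypothesis Hnorm : \sum_(k < 5) c k * lam k = 1.

Lemma A1E : A 1 *m comb c = th *: comb c.
Proof.
rewrite mulA1comb -combZ; apply/matrixP => i j; rewrite !comb_entry.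
by rewrite HLc ?typ_lt.
Qed.

Lemma EA1 : comb c *m A 1 = th *: comb c.
Proof.
apply: trmx_inj; rewrite trmx_mul A_sym // comb_sym A1E.
by apply/matrixP => i j; rewrite !mxE comb_entry typ_sym comb_entry.
Qed.

Lemma Eeig (u : 'rV[R]_nV) : u *m A 1 = th *: u -> u *m comb c = u.
Proof.
move=> H; rewrite mulcomb_r.
rewrite (eq_bigr (fun k : 'I_5 => (c k * lam k) *: u)); last first.
  by move=> k _; rewrite Hlam ?ltn_ord // scalerA.
by rewrite -scaler_suml Hnorm scale1r.
Qed.

Lemma EAk k : (k < 5)%N -> comb c *m A k = lam k *: comb c.
Proof.
move=> Hk; apply/row_matrixP => i.
rewrite row_mul Hlam //; last by rewrite -row_mul EA1; apply/matrixP => a b; rewrite !mxE.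
by apply/matrixP => a b; rewrite !mxE.
Qed.

Lemma AkE k : (k < 5)%N -> A k *m comb c = lam k *: comb c.
Proof.
move=> Hk; apply: trmx_inj; rewrite trmx_mul A_sym // comb_sym EAk //.
by apply/matrixP => i j; rewrite !mxE comb_entry typ_sym comb_entry.
Qed.

Lemma EE : comb c *m comb c = comb c.
Proof.
rewrite mulcomb_r.
rewrite (eq_bigr (fun k : 'I_5 => (c k * lam k) *: comb c)); last first.
  by move=> k _; rewrite EAk ?ltn_ord // scalerA.
by rewrite -scaler_suml Hnorm scale1r.
Qed.
End Proj.
End Mx.

Section Inst.
Variable R : realFieldType.
Local Notation A := (Amx R).

Definition L5 (a b c d e : R) (k : nat) : R := nth 0 [:: a; b; c; d; e] k.


Definition c36 : nat -> R := (fun _ : nat => 1/280).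
Definition l36 : nat -> R := L5 1 36 162 54 27.

Lemma HLc_36 : forall t, (t < 5)%N -> \sum_(k < 5) (Lnat t k)%:R * c36 k = 36 * c36 t.
Proof.
move=> t Ht; rewrite !big_ord_recr big_ord0 /=.
case: t Ht => [|[|[|[|[|t]]]]] // _; rewrite /Lnat /= /c36 /L5 /=; lra.
Qed.

Lemma Hnorm_36 : \sum_(k < 5) c36 k * l36 k = 1.
Proof. rewrite !big_ord_recr big_ord0 /= /c36 /l36 /L5 /=; lra. Qed.

Lemma Hlam_36 (u : 'rV[R]_nV) : u *m A 1 = 36 *: u ->
  forall k, (k < 5)%N -> u *m A k = l36 k *: u.
Proof.
move=> H k Hk; apply/matrixP => i j; rewrite (ord1 i) [in RHS]mxE.
have e := eigen_eqs H.
have e0 := e 0%N isT j; have e1 := e 1%N isT j; have e2 := e 2%N isT j.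
have e3 := e 3%N isT j; have e4 := e 4%N isT j.
move: e0 e1 e2 e3 e4; rewrite !big_ord_recr !big_ord0 /= /Lnat /=.
rewrite mulmx1.
case: k Hk => [|[|[|[|[|k]]]]] // _; rewrite /l36 /L5 /= ?mulmx1; lra.
Qed.

Definition E36 := comb c36.
Lemma E36_sym : E36^T = E36. Proof. exact: comb_sym. Qed.
Lemma E36_idem : E36 *m E36 = E36.
Proof. exact: (EE HLc_36 Hlam_36 Hnorm_36). Qed.
Lemma AkE36 k : (k < 5)%N -> A k *m E36 = l36 k *: E36.
Proof. exact: (AkE HLc_36 Hlam_36). Qed.

Definition cm12 : nat -> R := L5 (27/280) (-9/280) (-1/280) (3/280) (11/280).
Definition lm12 : nat -> R := L5 1 (-12) (-6) 6 11.

Lemma HLc_m12 : forall t, (t < 5)%N -> \sum_(k < 5) (Lnat t k)%:R * cm12 k = (-12) * cm12 t.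
Proof.
move=> t Ht; rewrite !big_ord_recr big_ord0 /=.
case: t Ht => [|[|[|[|[|t]]]]] // _; rewrite /Lnat /= /cm12 /L5 /=; lra.
Qed.

Lemma Hnorm_m12 : \sum_(k < 5) cm12 k * lm12 k = 1.
Proof. rewrite !big_ord_recr big_ord0 /= /cm12 /lm12 /L5 /=; lra. Qed.

Lemma Hlam_m12 (u : 'rV[R]_nV) : u *m A 1 = (-12) *: u ->
  forall k, (k < 5)%N -> u *m A k = lm12 k *: u.
Proof.
move=> H k Hk; apply/matrixP => i j; rewrite (ord1 i) [in RHS]mxE.
have e := eigen_eqs H.
have e0 := e 0%N isT j; have e1 := e 1%N isT j; have e2 := e 2%N isT j.
have e3 := e 3%N isT j; have e4 := e 4%N isT j.
move: e0 e1 e2 e3 e4; rewrite !big_ord_recr !big_ord0 /= /Lnat /=.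
rewrite mulmx1.
case: k Hk => [|[|[|[|[|k]]]]] // _; rewrite /lm12 /L5 /= ?mulmx1; lra.
Qed.

Definition Em12 := comb cm12.
Lemma Em12_sym : Em12^T = Em12. Proof. exact: comb_sym. Qed.
Lemma Em12_idem : Em12 *m Em12 = Em12.
Proof. exact: (EE HLc_m12 Hlam_m12 Hnorm_m12). Qed.
Lemma AkEm12 k : (k < 5)%N -> A k *m Em12 = lm12 k *: Em12.
Proof. exact: (AkE HLc_m12 Hlam_m12). Qed.

Definition cm4 : nat -> R := L5 (3/10) (-1/30) (1/45) (-1/30) (-1/30).
Definition lm4 : nat -> R := L5 1 (-4) 12 (-6) (-3).

Lemma HLc_m4 : forall t, (t < 5)%N -> \sum_(k < 5) (Lnat t k)%:R * cm4 k = (-4) * cm4 t.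
Proof.
move=> t Ht; rewrite !big_ord_recr big_ord0 /=.
case: t Ht => [|[|[|[|[|t]]]]] // _; rewrite /Lnat /= /cm4 /L5 /=; lra.
Qed.

Lemma Hnorm_m4 : \sum_(k < 5) cm4 k * lm4 k = 1.
Proof. rewrite !big_ord_recr big_ord0 /= /cm4 /lm4 /L5 /=; lra. Qed.

Lemma Hlam_m4 (u : 'rV[R]_nV) : u *m A 1 = (-4) *: u ->
  forall k, (k < 5)%N -> u *m A k = lm4 k *: u.
Proof.
move=> H k Hk; apply/matrixP => i j; rewrite (ord1 i) [in RHS]mxE.
have e := eigen_eqs H.
have e0 := e 0%N isT j; have e1 := e 1%N isT j; have e2 := e 2%N isT j.
have e3 := e 3%N isT j; have e4 := e 4%N isT j.
move: e0 e1 e2 e3 e4; rewrite !big_ord_recr !big_ord0 /= /Lnat /=.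
rewrite mulmx1.
case: k Hk => [|[|[|[|[|k]]]]] // _; rewrite /lm4 /L5 /= ?mulmx1; lra.
Qed.

Definition Em4 := comb cm4.
Lemma Em4_sym : Em4^T = Em4. Proof. exact: comb_sym. Qed.
Lemma Em4_idem : Em4 *m Em4 = Em4.
Proof. exact: (EE HLc_m4 Hlam_m4 Hnorm_m4). Qed.
Lemma AkEm4 k : (k < 5)%N -> A k *m Em4 = lm4 k *: Em4.
Proof. exact: (AkE HLc_m4 Hlam_m4). Qed.

Definition cp2 : nat -> R := L5 (3/7) (1/42) (-1/63) (1/21) (-1/21).
Definition lp2 : nat -> R := L5 1 2 (-6) 6 (-3).

Lemma HLc_p2 : forall t, (t < 5)%N -> \sum_(k < 5) (Lnat t k)%:R * cp2 k = 2 * cp2 t.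
Proof.
move=> t Ht; rewrite !big_ord_recr big_ord0 /=.
case: t Ht => [|[|[|[|[|t]]]]] // _; rewrite /Lnat /= /cp2 /L5 /=; lra.
Qed.

Lemma Hnorm_p2 : \sum_(k < 5) cp2 k * lp2 k = 1.
Proof. rewrite !big_ord_recr big_ord0 /= /cp2 /lp2 /L5 /=; lra. Qed.

Lemma Hlam_p2 (u : 'rV[R]_nV) : u *m A 1 = 2 *: u ->
  forall k, (k < 5)%N -> u *m A k = lp2 k *: u.
Proof.
move=> H k Hk; apply/matrixP => i j; rewrite (ord1 i) [in RHS]mxE.
have e := eigen_eqs H.
have e0 := e 0%N isT j; have e1 := e 1%N isT j; have e2 := e 2%N isT j.
have e3 := e 3%N isT j; have e4 := e 4%N isT j.
move: e0 e1 e2 e3 e4; rewrite !big_ord_recr !big_ord0 /= /Lnat /=.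
rewrite mulmx1.
case: k Hk => [|[|[|[|[|k]]]]] // _; rewrite /lp2 /L5 /= ?mulmx1; lra.
Qed.

Definition Ep2 := comb cp2.
Lemma Ep2_sym : Ep2^T = Ep2. Proof. exact: comb_sym. Qed.
Lemma Ep2_idem : Ep2 *m Ep2 = Ep2.
Proof. exact: (EE HLc_p2 Hlam_p2 Hnorm_p2). Qed.
Lemma AkEp2 k : (k < 5)%N -> A k *m Ep2 = lp2 k *: Ep2.
Proof. exact: (AkE HLc_p2 Hlam_p2). Qed.

Definition cp8 : nat -> R := L5 (6/35) (4/105) (-2/315) (-1/35) (4/105).
Definition lp8 : nat -> R := L5 1 8 (-6) (-9) 6.

Lemma HLc_p8 : forall t, (t < 5)%N -> \sum_(k < 5) (Lnat t k)%:R * cp8 k = 8 * cp8 t.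
Proof.
move=> t Ht; rewrite !big_ord_recr big_ord0 /=.
case: t Ht => [|[|[|[|[|t]]]]] // _; rewrite /Lnat /= /cp8 /L5 /=; lra.
Qed.

Lemma Hnorm_p8 : \sum_(k < 5) cp8 k * lp8 k = 1.
Proof. rewrite !big_ord_recr big_ord0 /= /cp8 /lp8 /L5 /=; lra. Qed.

Lemma Hlam_p8 (u : 'rV[R]_nV) : u *m A 1 = 8 *: u ->
  forall k, (k < 5)%N -> u *m A k = lp8 k *: u.
Proof.
move=> H k Hk; apply/matrixP => i j; rewrite (ord1 i) [in RHS]mxE.
have e := eigen_eqs H.
have e0 := e 0%N isT j; have e1 := e 1%N isT j; have e2 := e 2%N isT j.
have e3 := e 3%N isT j; have e4 := e 4%N isT j.
move: e0 e1 e2 e3 e4; rewrite !big_ord_recr !big_ord0 /= /Lnat /=.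
rewrite mulmx1.
case: k Hk => [|[|[|[|[|k]]]]] // _; rewrite /lp8 /L5 /= ?mulmx1; lra.
Qed.

Definition Ep8 := comb cp8.
Lemma Ep8_sym : Ep8^T = Ep8. Proof. exact: comb_sym. Qed.
Lemma Ep8_idem : Ep8 *m Ep8 = Ep8.
Proof. exact: (EE HLc_p8 Hlam_p8 Hnorm_p8). Qed.
Lemma AkEp8 k : (k < 5)%N -> A k *m Ep8 = lp8 k *: Ep8.
Proof. exact: (AkE HLc_p8 Hlam_p8). Qed.
End Inst.

Section Main.
Variable R : realFieldType.
Local Notation A := (Amx R).
Local Notation qf x M := ((x^T *m M *m x) 0 0).

Lemma entry1 (i j : 'I_nV) : (1%:M : 'M[R]_nV) i j = (typ i j == 0)%:R.
Proof. exact: (Aentry R (k:=0) i j isT). Qed.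

Lemma Esum : E36 R + Em12 R + Em4 R + Ep2 R + Ep8 R = 1%:M.
Proof.
apply/matrixP => i j; rewrite entry1 !mxE /E36 /Em12 /Em4 /Ep2 /Ep8 !comb_entry.
case: (typ i j) (typ_lt i j) => [|[|[|[|[|t]]]]] // _;
  rewrite /c36 /cm12 /cm4 /cp2 /cp8 /L5 /=; lra.
Qed.

Lemma qfD (x : 'cV[R]_nV) M N : qf x (M + N) = qf x M + qf x N.
Proof. by rewrite mulmxDr mulmxDl mxE. Qed.

Lemma qfZ (x : 'cV[R]_nV) a M : qf x (a *: M) = a * qf x M.
Proof. by rewrite -scalemxAr -scalemxAl mxE. Qed.

Lemma qfA (x : 'cV[R]_nV) k : (k < 5)%N -> qf x (A k) =
  l36 R k * qf x (E36 R) + lm12 R k * qf x (Em12 R) + lm4 R k * qf x (Em4 R)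
  + lp2 R k * qf x (Ep2 R) + lp8 R k * qf x (Ep8 R).
Proof.
move=> Hk.
have -> : A k = l36 R k *: E36 R + lm12 R k *: Em12 R + lm4 R k *: Em4 R
   + lp2 R k *: Ep2 R + lp8 R k *: Ep8 R.
  by rewrite -{1}(mulmx1 (A k)) -Esum !mulmxDr AkE36 // AkEm12 // AkEm4 // AkEp2 // AkEp8.
by rewrite !qfD !qfZ.
Qed.

Lemma qf_ge0 (x : 'cV[R]_nV) (E : 'M[R]_nV) : E^T = E -> E *m E = E -> 0 <= qf x E.
Proof.
move=> ET EE.
have -> : x^T *m E *m x = (E *m x)^T *m (E *m x).
  by rewrite trmx_mul ET mulmxA -(mulmxA _ E E) EE.
rewrite mxE; apply: sumr_ge0 => i _; rewrite [X in X * _]mxE -expr2; exact: sqr_ge0.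
Qed.

Lemma sumx (S : {set part33}) : \sum_(i < nV) (charvec R S) i 0 = #|S|%:R.
Proof.
under eq_bigr do rewrite mxE.
rewrite -natr_sum (sum_vtx (fun p => (p \in S : nat))).
have E : (\sum_(p : part33) (p \in S : nat) = #|S|)%N.
  by rewrite -sum1_card [RHS]big_mkcond; apply: eq_bigr => p _; case: (p \in S).
congr (_%:R); exact: E.
Qed.

Lemma qf1 (S : {set part33}) : qf (charvec R S) 1%:M = #|S|%:R.
Proof.
rewrite mulmx1 mxE -sumx; apply: eq_bigr => i _; rewrite !mxE.
by case: (vtx i \in S); rewrite ?mulr1 ?mulr0.
Qed.

Lemma qfA1 (S : {set part33}) : independent33 S -> qf (charvec R S) (A 1) = 0.
Proof.
move=> Hind; rewrite mxE big1 // => j _; rewrite [X in _ * X]mxE.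
case Hj: (vtx j \in S); last by rewrite mulr0.
rewrite mxE big1 ?mul0r // => i _; rewrite !mxE.
case Hi: (vtx i \in S); last by rewrite mul0r.
move/forall_inP: Hind => /(_ _ Hi) /forall_inP /(_ _ Hj).
by rewrite /adj33 => /negbTE ->; rewrite mulr0.
Qed.

Lemma qfE36 (S : {set part33}) : qf (charvec R S) (E36 R) = (#|S|%:R ^+ 2) / 280.
Proof.
set x := charvec R S.
rewrite mxE (eq_bigr (fun j => (1/280 * \sum_(i < nV) x i 0) * x j 0)); last first.
  move=> j _; rewrite mxE mulr_sumr; congr (_ * _); apply: eq_bigr => i _.
  by rewrite !mxE /E36 comb_entry /c36 mulrC.
by rewrite -mulr_sumr /x sumx; lra.
Qed.

Lemma E1_eq : E1 R = Em12 R.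
Proof.
rewrite /E1; apply: orthoproj_eq.
- exact: Em12_sym.
- exact: Em12_idem.
- apply/row_subP => i.
  have h : row i (eigenspace (A 1) (-12)) *m A 1 = -12 *: row i (eigenspace (A 1) (-12)).
    by apply/eigenspaceP; exact: row_sub.
  rewrite -(Eeig (@Hlam_m12 R) (@Hnorm_m12 R) h); exact: submxMl.
- apply/row_subP => i; apply/eigenspaceP.
  rewrite -row_mul (EA1 (@HLc_m12 R)); by apply/matrixP => a b; rewrite !mxE.
Qed.

Lemma E0_eq : E0 R = E36 R.
Proof. apply/matrixP => i j; rewrite /E0 !mxE /E36 comb_entry /c36; lra. Qed.

Lemma combL5 a b c d e : a *: A 0 + b *: A 1 + c *: A 2 + d *: A 3 + e *: A 4 = comb (L5 a b c d e).
Proof. by rewrite /comb !big_ord_recr big_ord0 /= add0r. Qed.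

End Main.

Unset Implicit Arguments.
Theorem mainTheorem5 (R : realFieldType) (S : {set part33}) :
  independent33 S -> #|S| = 70%N ->
  let x := charvec R S in
  \sum_(k < 5) (((x^T *m Amx R k *m x) 0 0) / (280 * (vval k)%:R)) *: Amx R k
    = 4^-1 *: 1%:M + 18^-1 *: Amx R 2 + 12^-1 *: Amx R 3 + (5 / 36) *: Amx R 4
  /\
  4^-1 *: 1%:M + 18^-1 *: Amx R 2 + 12^-1 *: Amx R 3 + (5 / 36) *: Amx R 4
    = (70 / 4) *: E0 R + (70 / 36) *: E1 R.
Proof.
move=> Hind HS x.
have q0 : (x^T *m 1%:M *m x) 0 0 = 70 by rewrite /x qf1 HS.
have q1 : (x^T *m Amx R 1 *m x) 0 0 = 0 by exact: qfA1.
have q36 : (x^T *m E36 R *m x) 0 0 = 35/2 by rewrite /x qfE36 HS expr2; lra.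
have g36 := qf_ge0 x (E36_sym R) (E36_idem R).
have gm12 := qf_ge0 x (Em12_sym R) (Em12_idem R).
have gm4 := qf_ge0 x (Em4_sym R) (Em4_idem R).
have gp2 := qf_ge0 x (Ep2_sym R) (Ep2_idem R).
have gp8 := qf_ge0 x (Ep8_sym R) (Ep8_idem R).
have a0 := qfA x (k:=0) isT; have a1 := qfA x (k:=1) isT; have a2 := qfA x (k:=2) isT.
have a3 := qfA x (k:=3) isT; have a4 := qfA x (k:=4) isT.
rewrite /l36 /lm12 /lm4 /lp2 /lp8 /L5 /= in a0 a1 a2 a3 a4.
rewrite /= in q1.
have v2 : (x^T *m Amx R 2 *m x) 0 0 = 2520 by rewrite /=; lra.
have v3 : (x^T *m Amx R 3 *m x) 0 0 = 1260 by rewrite /=; lra.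
have v4 : (x^T *m Amx R 4 *m x) 0 0 = 1050 by rewrite /=; lra.
have v1 : (x^T *m Amx R 1 *m x) 0 0 = 0 by [].
have v0 : (x^T *m Amx R 0 *m x) 0 0 = 70 by [].
have RHS1 : 4^-1 *: 1%:M + 18^-1 *: Amx R 2 + 12^-1 *: Amx R 3 + (5 / 36) *: Amx R 4
   = comb (L5 (4^-1) 0 (18^-1) (12^-1) (5/36)).
  by rewrite -combL5 scale0r addr0.
rewrite RHS1; split.
  have -> : \sum_(k < 5) (((x^T *m Amx R k *m x) 0 0) / (280 * (vval k)%:R)) *: Amx R k
     = comb (fun k : nat => ((x^T *m Amx R k *m x) 0 0) / (280 * (vval k)%:R)) by [].
  apply/matrixP => i j; rewrite !comb_entry.
  case: (typ i j) (typ_lt i j) => [|[|[|[|[|t]]]]] // _.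
  - by rewrite v0 /L5 /=; lra.
  - by rewrite v1 /L5 /=; lra.
  - by rewrite v2 /L5 /=; lra.
  - by rewrite v3 /L5 /=; lra.
  - by rewrite v4 /L5 /=; lra.
rewrite E1_eq E0_eq; apply/matrixP => i j; rewrite !mxE /E36 /Em12 !comb_entry.
case: (typ i j) (typ_lt i j) => [|[|[|[|[|t]]]]] // _; rewrite /L5 /c36 /cm12 /L5 /=; lra.
Qed.
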